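(* Let $w = e^{i\varphi}$ with $0 < \varphi < \pi$, and put $\sqrt{w} = e^{i\varphi/2}$. Let $n$ and $r$ be positive integers and \[ R_{n,r}(x) = \frac{\Gamma(r+1+1/n)}{r!\,\Gamma(1/n)} \int_{1}^{x} (1-t)^{r}(t-x)^{r} t^{-(r+1-1/n)}\, dt, \] where the integration path is the straight line from $1$ to $x$. Then \[ \left|R_{n,r}(w)\right| \leq \frac{\Gamma(r+1+1/n)}{r!\,\Gamma(1/n)}\, \varphi\, \left|1-\sqrt{w}\right|^{2r}. \]
   Context: The power $t^{-(r+1-1/n)}$ is taken with the principal branch. *)

(* Defs.v *)
From Stdlib Require Import Reals.
From Stdlib Require Import Factorial.
From Coquelicot Require Import Coquelicot.
Open Scope R_scope.

Definition Gamma (s : R) : R :=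
  RInt_gen (fun t => Rpower t (s - 1) * exp (- t)) (at_right 0) (Rbar_locally p_infty).

Definition Carg (z : C) : R :=
  if Rle_dec 0 (Im z) then acos (Re z / Cmod z) else - acos (Re z / Cmod z).

Definition Clog (z : C) : C := (ln (Cmod z), Carg z).

Definition Cexp (z : C) : C := (exp (Re z) * cos (Im z), exp (Re z) * sin (Im z)).

Definition Cpow_princ (z a : C) : C := Cexp (Cmult a (Clog z)).

Definition CRInt (f : R -> C) (a b : R) : C :=
  (RInt (fun s => Re (f s)) a b, RInt (fun s => Im (f s)) a b).

Definition seg_int (f : C -> C) (z0 z1 : C) : C :=
  CRInt (fun s => Cmult (f (Cplus z0 (Cmult (RtoC s) (Cminus z1 z0)))) (Cminus z1 z0)) 0 1.

Definition cst_nr (n r : nat) : R :=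
  Gamma (INR r + 1 + / INR n) / (INR (Factorial.fact r) * Gamma (/ INR n)).

Definition R_nr (n r : nat) (x : C) : C :=
  Cmult (RtoC (cst_nr n r))
    (seg_int (fun t => Cmult (Cmult (pow_n (Cminus (RtoC 1) t) r) (pow_n (Cminus t x) r))
                             (Cpow_princ t (RtoC (- (INR r + 1 - / INR n)))))
             (RtoC 1) x).

(* Main.v *)
Require Import Defs.
From Stdlib Require Import Reals Lra Factorial Classical.
From Coquelicot Require Import Coquelicot.
Open Scope R_scope.

Lemma deq (f : R -> R) (x l lp : R) : is_derive f x l -> l = lp -> is_derive f x lp.
Proof. intros H <-; exact H. Qed.
Lemma dmult f g x a b : is_derive f x a -> is_derive g x b ->
  is_derive (fun t => f t * g t) x (a * g x + f x * b).
Proof. intros Ha Hb. apply (is_derive_mult f g x a b Ha Hb). intros; apply Rmult_comm. Qed.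
Lemma dplus f g x a b : is_derive f x a -> is_derive g x b ->
  is_derive (fun t => f t + g t) x (a + b).
Proof. intros Ha Hb. apply (is_derive_plus f g x a b Ha Hb). Qed.
Lemma dminus f g x a b : is_derive f x a -> is_derive g x b ->
  is_derive (fun t => f t - g t) x (a - b).
Proof. intros Ha Hb. apply (is_derive_minus f g x a b Ha Hb). Qed.
Lemma dconst (c : R) x : is_derive (fun _ => c) x 0.
Proof. apply (is_derive_const c x). Qed.
Lemma did x : is_derive (fun t : R => t) x 1.
Proof. apply (is_derive_id x). Qed.
Lemma dcomp (f g : R -> R) x a b : is_derive f (g x) a -> is_derive g x b ->
  is_derive (fun t => f (g t)) x (b * a).
Proof. intros Ha Hb. apply (is_derive_comp f g x a b Ha Hb). Qed.
Lemma dexp f x a : is_derive f x a -> is_derive (fun t => exp (f t)) x (a * exp (f x)).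
Proof. intros H. apply (dcomp exp f). apply is_derive_Reals, derivable_pt_lim_exp. exact H. Qed.
Lemma dcos f x a : is_derive f x a -> is_derive (fun t => cos (f t)) x (a * - sin (f x)).
Proof. intros H. apply (dcomp cos f). apply is_derive_Reals, derivable_pt_lim_cos. exact H. Qed.
Lemma dsin f x a : is_derive f x a -> is_derive (fun t => sin (f t)) x (a * cos (f x)).
Proof. intros H. apply (dcomp sin f). apply is_derive_Reals, derivable_pt_lim_sin. exact H. Qed.
Lemma dln f x a : 0 < f x -> is_derive f x a -> is_derive (fun t => ln (f t)) x (a * / f x).
Proof. intros P H. apply (dcomp ln f). apply is_derive_Reals, derivable_pt_lim_ln; auto. exact H. Qed.
Lemma dsqrt f x a : 0 < f x -> is_derive f x a -> is_derive (fun t => sqrt (f t)) x (a * / (2 * sqrt (f x))).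
Proof. intros P H. apply (dcomp sqrt f). apply is_derive_Reals, derivable_pt_lim_sqrt; auto. exact H. Qed.
Lemma datan f x a : is_derive f x a -> is_derive (fun t => atan (f t)) x (a * / (1 + f x ^ 2)).
Proof. intros H. apply (dcomp atan f). apply is_derive_Reals, derivable_pt_lim_atan. exact H. Qed.
Lemma ddiv f g x a b : is_derive f x a -> is_derive g x b -> g x <> 0 ->
  is_derive (fun t => f t / g t) x ((a * g x - f x * b) / g x ^ 2).
Proof. intros; apply is_derive_div; auto. Qed.

Lemma loc_pos (phi : R -> R) x : continuous phi x -> 0 < phi x -> locally x (fun t => 0 < phi t).
Proof.
  intros Hc Hp. apply (Hc (fun y => 0 < y)).
  exists (mkposreal _ Hp). intros y Hy. simpl in Hy.
  unfold ball in Hy; simpl in Hy. unfold AbsRing_ball, abs, minus, plus, opp in Hy; simpl in Hy.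
  apply Rabs_def2 in Hy. lra.
Qed.

Definition CD (g : R -> C) (x : R) (d : C) : Prop :=
  is_derive (fun s => fst (g s)) x (fst d) /\ is_derive (fun s => snd (g s)) x (snd d).

Lemma CD_const (c : C) x : CD (fun _ => c) x (RtoC 0).
Proof. split; simpl; apply dconst. Qed.

Lemma CD_plus f g x a b : CD f x a -> CD g x b ->
  CD (fun t => Cplus (f t) (g t)) x (Cplus a b).
Proof. intros [H1 H2] [H3 H4]; split; simpl; [apply dplus|apply dplus]; auto. Qed.

Lemma CD_mult f g x a b : CD f x a -> CD g x b ->
  CD (fun t => Cmult (f t) (g t)) x (Cplus (Cmult a (g x)) (Cmult (f x) b)).
Proof.
  intros [H1 H2] [H3 H4]; split; simpl.
  - eapply deq. apply dminus; apply dmult; eassumption. cbv beta; ring.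
  - eapply deq. apply dplus; apply dmult; eassumption. cbv beta; ring.
Qed.

Lemma CD_ext f g x d : (forall t, f t = g t) -> CD f x d -> CD g x d.
Proof.
  intros E [H1 H2]; split.
  - eapply is_derive_ext; [|exact H1]. intros; simpl; rewrite E; auto.
  - eapply is_derive_ext; [|exact H2]. intros; simpl; rewrite E; auto.
Qed.

Lemma CD_eq f x d d' : CD f x d -> d = d' -> CD f x d'.
Proof. intros H <-; auto. Qed.

Lemma CD_cont f x d : CD f x d -> continuous (fun s => fst (f s)) x /\ continuous (fun s => snd (f s)) x.
Proof. intros [H1 H2]; split; apply (ex_derive_continuous (K:=R_AbsRing) (V:=R_NormedModule)); eexists; eauto. Qed.

Lemma CD_Cexp u x d : CD u x d -> CD (fun t => Cexp (u t)) x (Cmult (Cexp (u x)) d).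
Proof.
  intros [H1 H2]; unfold Cexp, Re, Im; split; simpl.
  - eapply deq. apply dmult. apply dexp; eassumption. apply dcos; eassumption. cbv beta; ring.
  - eapply deq. apply dmult. apply dexp; eassumption. apply dsin; eassumption. cbv beta; ring.
Qed.

Lemma atan_0' : atan 0 = 0.
Proof. rewrite <- tan_0 at 1. apply atan_tan. pose proof PI_RGT_0; lra. Qed.

Lemma atan_nonneg q : 0 <= q -> 0 <= atan q.
Proof. intros [H|H]. rewrite <- atan_0'. left; apply atan_increasing; auto. subst; rewrite atan_0'; lra. Qed.

Lemma atan_neg q : q < 0 -> atan q < 0.
Proof. intros H. rewrite <- atan_0'. apply atan_increasing; auto. Qed.


Lemma one_q2 (x y m : R) (Hm : 0 < m) (Hmm : m * m = x * x + y * y) (Hu : 0 < m + x) : 1 + (y / (m + x)) ^ 2 = 2 * m / (m + x).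
Proof.
  assert (E : (m+x)*(m+x) + y*y = 2*m*(m+x)).
  { replace ((m+x)*(m+x)+y*y) with (m*m + 2*m*x + (x*x+y*y)) by ring. rewrite <- Hmm. ring. }
  field_simplify_eq; [|lra]. replace (y^2) with (y*y) by ring.
  replace ((m + x) ^ 2) with ((m+x)*(m+x)) by ring. nra.
Qed.

Lemma cos2atan (x y m : R) (Hm : 0 < m) (Hmm : m * m = x * x + y * y) (Hu : 0 < m + x) : cos (2 * atan (y / (m + x))) = x / m.
Proof.
  rewrite cos_2a_cos, cos_atan.
  set (q := y / (m+x)).
  assert (P : 0 < 1 + q²) by (unfold Rsqr; nra).
  assert (C2 : 1 / sqrt (1 + q²) * (1 / sqrt (1 + q²)) = / (1 + q^2)).
  { assert (S1 : sqrt (1 + q²) * sqrt (1 + q²) = 1 + q^2) by (rewrite sqrt_sqrt by lra; unfold Rsqr; ring).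
    assert (S2 : sqrt (1 + q²) <> 0) by (apply Rgt_not_eq, sqrt_lt_R0; lra).
    rewrite <- S1. field. auto. }
  replace (2 * (1 / sqrt (1 + q²)) * (1 / sqrt (1 + q²)) - 1) with
    (2 * (1 / sqrt (1 + q²) * (1 / sqrt (1 + q²))) - 1) by ring.
  rewrite C2. unfold q; rewrite one_q2 by auto. field. lra.
Qed.

Lemma sin2atan (x y m : R) (Hm : 0 < m) (Hmm : m * m = x * x + y * y) (Hu : 0 < m + x) : sin (2 * atan (y / (m + x))) = y / m.
Proof.
  rewrite sin_2a, cos_atan, sin_atan.
  set (q := y / (m+x)).
  assert (P : 0 < 1 + q²) by (unfold Rsqr; nra).
  assert (C2 : q / sqrt (1 + q²) * (1 / sqrt (1 + q²)) = q / (1 + q^2)).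
  { assert (S1 : sqrt (1 + q²) * sqrt (1 + q²) = 1 + q^2) by (rewrite sqrt_sqrt by lra; unfold Rsqr; ring).
    assert (S2 : sqrt (1 + q²) <> 0) by (apply Rgt_not_eq, sqrt_lt_R0; lra).
    rewrite <- S1. field. auto. }
  replace (2 * (q / sqrt (1 + q²)) * (1 / sqrt (1 + q²))) with
    (2 * (q / sqrt (1 + q²) * (1 / sqrt (1 + q²)))) by ring.
  rewrite C2. unfold q at 2; rewrite one_q2 by auto. unfold q. field. lra.
Qed.

Definition slit (z : C) := 0 < Cmod z + fst z.

Lemma Cmod_sq z : Cmod z * Cmod z = fst z * fst z + snd z * snd z.
Proof. unfold Cmod. rewrite sqrt_sqrt. ring. nra. Qed.

Lemma Cmod_ge_re z : Rabs (fst z) <= Cmod z.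
Proof.
  unfold Cmod. rewrite <- sqrt_Rsqr_abs. apply sqrt_le_1_alt. unfold Rsqr. nra.
Qed.

Lemma slit_pos z : slit z -> 0 < Cmod z.
Proof.
  unfold slit; intros H. pose proof (Cmod_ge_re z).
  destruct (Rle_dec 0 (fst z)); [rewrite Rabs_right in H0 by lra|rewrite Rabs_left in H0 by lra]; lra.
Qed.

Lemma Carg_slit z : slit z -> Carg z = 2 * atan (snd z / (Cmod z + fst z)).
Proof.
  intros Hs. pose proof (slit_pos z Hs) as Hm. pose proof (Cmod_sq z) as Hmm.
  unfold slit in Hs. pose proof PI_RGT_0.
  unfold Carg, Im, Re. destruct (Rle_dec 0 (snd z)) as [Hy|Hy].
  - rewrite <- (cos2atan (fst z) (snd z) (Cmod z)) by auto.
    apply acos_cos.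
    assert (0 <= snd z / (Cmod z + fst z)) by (apply Rdiv_le_0_compat; lra).
    pose proof (atan_nonneg _ H0). pose proof (atan_bound (snd z / (Cmod z + fst z))). lra.
  - rewrite <- (cos2atan (fst z) (snd z) (Cmod z)) by auto.
    rewrite <- (cos_neg (2 * atan (snd z / (Cmod z + fst z)))).
    assert (snd z / (Cmod z + fst z) < 0).
    { apply Rmult_lt_reg_r with (Cmod z + fst z); auto. field_simplify; lra. }
    pose proof (atan_neg _ H0). pose proof (atan_bound (snd z / (Cmod z + fst z))).
    rewrite acos_cos by lra. ring.
Qed.

Lemma Cexp_Clog z : slit z -> Cexp (Clog z) = z.
Proof.
  intros Hs. pose proof (slit_pos z Hs) as Hm. pose proof (Cmod_sq z) as Hmm.
  unfold Cexp, Clog, Re, Im; simpl. rewrite exp_ln by auto.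
  rewrite Carg_slit by auto. unfold slit in Hs.
  rewrite cos2atan, sin2atan by auto.
  destruct z as [a b]; simpl. f_equal; field; lra.
Qed.

Lemma dsq f x a : is_derive f x a -> is_derive (fun t => f t ^ 2) x (2 * f x * a).
Proof. intros H. eapply deq. apply is_derive_pow; eauto. simpl. ring. Qed.

Lemma dCmod g x d : CD g x d -> 0 < Cmod (g x) ->
  is_derive (fun t => Cmod (g t)) x ((fst (g x) * fst d + snd (g x) * snd d) / Cmod (g x)).
Proof.
  intros [H1 H2] Hm. pose proof (Cmod_sq (g x)) as Hmm. unfold Cmod in *.
  set (S := fst (g x) ^ 2 + snd (g x) ^ 2) in *.
  assert (0 < S). { destruct (Rle_lt_dec S 0); auto. assert (S = 0) by (unfold S in *; nra).
    rewrite H, sqrt_0 in Hm. lra. }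
  eapply deq. apply dsqrt. exact H. apply dplus; apply dsq; eassumption.
  cbv beta. fold S. field. lra.
Qed.

Lemma CD_Clog g x d : CD g x d -> slit (g x) -> CD (fun t => Clog (g t)) x (Cmult d (Cinv (g x))).
Proof.
  intros Hd Hs. pose proof (slit_pos _ Hs) as Hm. pose proof (Cmod_sq (g x)) as Hmm.
  pose proof (dCmod g x d Hd Hm) as HM.
  destruct Hd as [H1 H2].
  split.
  - unfold Clog; simpl. eapply deq. apply dln; eauto.
    cbv beta. set (X := fst (g x)) in *. set (Y := snd (g x)) in *. set (M := Cmod (g x)) in *.
    replace (X*(X*1)+Y*(Y*1)) with (M*M) by (rewrite Hmm; ring). field. lra.
  - assert (Hphi : is_derive (fun t => Cmod (g t) + fst (g t)) x
       ((fst (g x) * fst d + snd (g x) * snd d) / Cmod (g x) + fst d)) by (apply dplus; auto).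
    assert (Hc : continuous (fun t => Cmod (g t) + fst (g t)) x).
    { apply (ex_derive_continuous (K:=R_AbsRing) (V:=R_NormedModule)). eexists; eauto. }
    pose proof (loc_pos _ x Hc Hs) as Hloc.
    apply is_derive_ext_loc with (f := fun t => 2 * atan (snd (g t) / (Cmod (g t) + fst (g t)))).
    { apply (filter_imp (fun t => 0 < Cmod (g t) + fst (g t))); auto.
      intros t Ht. unfold Clog; simpl. symmetry; apply Carg_slit. exact Ht. }
    eapply deq. apply is_derive_scal. apply datan. apply ddiv. exact H2. exact Hphi.
    unfold slit in Hs; lra.
    cbv beta. unfold slit in Hs.
    set (X := fst (g x)) in *. set (Y := snd (g x)) in *. set (M := Cmod (g x)) in *.
    rewrite one_q2 by auto. simpl. fold X Y.
    replace (X*(X*1)+Y*(Y*1)) with (M*M) by (rewrite Hmm; ring). field_simplify_eq; [|repeat split; lra].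
    replace (snd d * M^2) with (snd d * (X*X + Y*Y)) by (rewrite <- Hmm; ring). ring.
Qed.

Lemma slit_nz z : slit z -> z <> RtoC 0.
Proof. intros H E. unfold slit in H. rewrite E in H. unfold Cmod in H. simpl in H.
  replace (0 * (0 * 1) + 0 * (0 * 1)) with 0 in H by ring. rewrite sqrt_0 in H. lra. Qed.

Lemma RtoC_nz e : e <> 0 -> RtoC e <> RtoC 0.
Proof. intros H E. apply H. injection E; auto. Qed.

Lemma Cexp_add u v : Cexp (Cplus u v) = Cmult (Cexp u) (Cexp v).
Proof.
  unfold Cexp, Cplus, Cmult, Re, Im; simpl. rewrite exp_plus, cos_plus, sin_plus.
  f_equal; ring.
Qed.

Lemma Cpow_add1 z e : slit z ->
  Cpow_princ z (RtoC (e + 1)) = Cmult z (Cpow_princ z (RtoC e)).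
Proof.
  intros Hs. unfold Cpow_princ.
  replace (Cmult (RtoC (e + 1)) (Clog z)) with (Cplus (Clog z) (Cmult (RtoC e) (Clog z))).
  - rewrite Cexp_add, Cexp_Clog; auto.
  - unfold Cplus, Cmult, RtoC; simpl. f_equal; ring.
Qed.

Lemma Cpow_0 z : Cpow_princ z (RtoC 0) = RtoC 1.
Proof.
  unfold Cpow_princ.
  replace (Cmult (RtoC 0) (Clog z)) with (RtoC 0) by (unfold Cmult, RtoC; simpl; f_equal; ring).
  unfold Cexp, RtoC, Re, Im; simpl. rewrite exp_0, cos_0, sin_0. f_equal; ring.
Qed.

Lemma CD_Cpow g x d e : CD g x d -> slit (g x) ->
  CD (fun t => Cpow_princ (g t) (RtoC e)) x
     (Cmult (Cmult (RtoC e) (Cpow_princ (g x) (RtoC e))) (Cmult d (Cinv (g x)))).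
Proof.
  intros Hd Hs. unfold Cpow_princ.
  eapply CD_eq. apply CD_Cexp. apply CD_mult. apply CD_const. apply CD_Clog; [exact Hd|exact Hs].
  cbv beta. ring.
Qed.

Definition AD (h : C -> C) := exists G : C -> C, forall g x d, CD g x d -> slit (g x) ->
  CD (fun t => G (g t)) x (Cmult (h (g x)) d).

Lemma AD_ext h1 h2 : (forall z, slit z -> h1 z = h2 z) -> AD h1 -> AD h2.
Proof.
  intros E [G HG]. exists G. intros g x d Hd Hs. rewrite <- E by auto. auto.
Qed.

Lemma AD_plus h1 h2 : AD h1 -> AD h2 -> AD (fun z => Cplus (h1 z) (h2 z)).
Proof.
  intros [G1 H1] [G2 H2]. exists (fun z => Cplus (G1 z) (G2 z)). intros g x d Hd Hs.
  eapply CD_eq. apply CD_plus; [apply H1|apply H2]; eauto. cbv beta. ring.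
Qed.

Lemma AD_scal c h : AD h -> AD (fun z => Cmult c (h z)).
Proof.
  intros [G H]. exists (fun z => Cmult c (G z)). intros g x d Hd Hs.
  eapply CD_eq. apply CD_mult. apply CD_const. apply H; eauto. cbv beta. ring.
Qed.

Lemma AD_pow e : AD (fun z => Cpow_princ z (RtoC e)).
Proof.
  destruct (Req_dec e (-1)) as [He|He].
  - exists Clog. intros g x d Hd Hs. eapply CD_eq. apply CD_Clog; [exact Hd|exact Hs]. cbv beta.
    assert (E : Cpow_princ (g x) (RtoC (e + 1)) = Cmult (g x) (Cpow_princ (g x) (RtoC e))) by (apply Cpow_add1; auto).
    replace (e + 1) with 0 in E by lra. rewrite Cpow_0 in E.
    pose proof (slit_nz _ Hs).
    replace (Cpow_princ (g x) (RtoC e)) with (Cinv (g x)).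
    + ring.
    + rewrite <- (Cmult_1_l (Cinv (g x))). rewrite E. field. auto.
  - exists (fun z => Cmult (RtoC (/ (e + 1))) (Cpow_princ z (RtoC (e + 1)))).
    intros g x d Hd Hs. eapply CD_eq. apply CD_mult. apply CD_const. apply CD_Cpow; [exact Hd|exact Hs]. cbv beta.
    pose proof (slit_nz _ Hs). rewrite Cpow_add1 by auto. rewrite RtoC_inv.
    field. split; auto. apply RtoC_nz. lra.
lra. Qed.

Definition PC (q : C -> C) := forall e, AD (fun z => Cmult (q z) (Cpow_princ z (RtoC e))).

Lemma PC_ext q1 q2 : PC q1 -> (forall z, q1 z = q2 z) -> PC q2.
Proof. intros H E e. eapply AD_ext; [|apply (H e)]. intros z _. simpl. rewrite E. auto. Qed.

Lemma PC_one : PC (fun _ => RtoC 1).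
Proof. intros e. eapply AD_ext; [|apply (AD_pow e)]. intros z _. cbv beta. ring. Qed.

Lemma PC_lin q al be : PC q -> PC (fun z => Cmult (q z) (Cplus al (Cmult be z))).
Proof.
  intros H e.
  apply AD_ext with (fun z => Cplus (Cmult al (Cmult (q z) (Cpow_princ z (RtoC e))))
                                    (Cmult be (Cmult (q z) (Cpow_princ z (RtoC (e + 1)))))).
  - intros z Hz. rewrite Cpow_add1 by auto. ring.
  - apply AD_plus; apply AD_scal; apply H.
Qed.

Lemma PC_pows w i j : PC (fun z => Cmult (pow_n (Cminus (RtoC 1) z) i) (pow_n (Cminus z w) j)).
Proof.
  induction j.
  - induction i.
    + eapply PC_ext. apply PC_one. intros z; simpl. change (@one C_Ring) with (RtoC 1). ring.
    + eapply PC_ext. apply (PC_lin _ (RtoC 1) (RtoC (-1)) IHi). intros z; simpl.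
      change (@mult C_Ring) with Cmult. change (@one C_Ring) with (RtoC 1).
      ring.
  - eapply PC_ext. apply (PC_lin _ (Copp w) (RtoC 1) IHj). intros z; simpl.
    change (@mult C_Ring) with Cmult. unfold Cminus. ring.
Qed.

Definition CDex f x := exists d, CD f x d.

Lemma CDex_mult f g x : CDex f x -> CDex g x -> CDex (fun t => Cmult (f t) (g t)) x.
Proof. intros [a Ha] [b Hb]. eexists. apply CD_mult; eauto. Qed.

Lemma CDex_pow f x k : CDex f x -> CDex (fun t => pow_n (f t) k) x.
Proof.
  intros Hf. induction k.
  - exists (RtoC 0). simpl. apply CD_const.
  - simpl. change (@mult C_Ring) with Cmult. apply CDex_mult; auto.
Qed.

Lemma CDex_cont f x : CDex f x -> continuous (fun s => fst (f s)) x /\ continuous (fun s => snd (f s)) x.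
Proof. intros [d H]. eapply CD_cont; eauto. Qed.

Lemma CRInt_FTC (G g : R -> C) a b : a <= b ->
  (forall s, a <= s <= b -> CD G s (g s)) ->
  (forall s, a <= s <= b -> CDex g s) ->
  is_RInt (fun s => fst (g s)) a b (fst (G b) - fst (G a)) /\
  is_RInt (fun s => snd (g s)) a b (snd (G b) - snd (G a)).
Proof.
  intros Hab HD HC. split.
  - apply (is_RInt_derive (fun s => fst (G s)) (fun s => fst (g s)));
     rewrite ?Rmin_left, ?Rmax_right by auto.
    + intros s Hs. apply (HD s Hs).
    + intros s Hs. apply (CDex_cont _ _ (HC s Hs)).
  - apply (is_RInt_derive (fun s => snd (G s)) (fun s => snd (g s)));
     rewrite ?Rmin_left, ?Rmax_right by auto.
    + intros s Hs. apply (HD s Hs).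
    + intros s Hs. apply (CDex_cont _ _ (HC s Hs)).
Qed.

Lemma CRInt_eq (G g : R -> C) a b : a <= b ->
  (forall s, a <= s <= b -> CD G s (g s)) ->
  (forall s, a <= s <= b -> CDex g s) ->
  CRInt g a b = Cminus (G b) (G a).
Proof.
  intros Hab HD HC. destruct (CRInt_FTC G g a b Hab HD HC) as [H1 H2].
  assert (E1 : RInt (fun s => fst (g s)) a b = fst (G b) - fst (G a)) by (apply is_RInt_unique; exact H1).
  assert (E2 : RInt (fun s => snd (g s)) a b = snd (G b) - snd (G a)) by (apply is_RInt_unique; exact H2).
  unfold CRInt, Re, Im. rewrite E1, E2.
  unfold Cminus, Cplus, Copp; simpl. f_equal; ring.
Qed.

Lemma CS_ineq (A B u v : R) : A * u + B * v <= Cmod (A, B) * Cmod (u, v).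
Proof.
  pose proof (Cmod_sq (A, B)) as E1. pose proof (Cmod_sq (u, v)) as E2. simpl in *.
  pose proof (Cmod_ge_0 (A, B)). pose proof (Cmod_ge_0 (u, v)).
  assert ((A*u + B*v) * (A*u+B*v) <= (Cmod (A,B) * Cmod (u,v)) * (Cmod (A,B) * Cmod (u,v))).
  { replace ((Cmod (A,B) * Cmod (u,v)) * (Cmod (A,B) * Cmod (u,v))) with
       ((Cmod (A,B) * Cmod (A,B)) * (Cmod (u,v) * Cmod (u,v))) by ring.
    rewrite E1, E2. pose proof (Rle_0_sqr (A*v - B*u)). unfold Rsqr in *. nra. }
  assert (0 <= Cmod (A,B) * Cmod (u,v)) by (apply Rmult_le_pos; auto).
  set (X := A*u+B*v) in *. set (Y := Cmod (A,B) * Cmod (u,v)) in *. nra.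
Qed.

Lemma CRInt_bound (g : R -> C) a b M : a <= b ->
  ex_RInt (fun s => fst (g s)) a b -> ex_RInt (fun s => snd (g s)) a b ->
  (forall s, a <= s <= b -> Cmod (g s) <= M) -> Cmod (CRInt g a b) <= (b - a) * M.
Proof.
  intros Hab H1 H2 HM. unfold CRInt, Re, Im.
  destruct (ex_intro (fun A : R => RInt (fun s => fst (g s)) a b = A) _ eq_refl) as [A HA].
  destruct (ex_intro (fun B : R => RInt (fun s => snd (g s)) a b = B) _ eq_refl) as [B HB].
  rewrite HA, HB. change (Cmod (@pair R R A B) <= (b - a) * M).
  assert (M0 : 0 <= M) by (pose proof (Cmod_ge_0 (g a)); pose proof (HM a); lra).
  pose proof (Cmod_ge_0 (A, B)) as C0.
  assert (Key : Cmod (A, B) * Cmod (A, B) <= Cmod (A, B) * ((b - a) * M)).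
  { rewrite Cmod_sq; simpl.
    assert (E : A * A + B * B = RInt (fun s => A * fst (g s) + B * snd (g s)) a b).
    { rewrite (RInt_plus (fun s => A * fst (g s)) (fun s => B * snd (g s))).
      - rewrite (RInt_scal (fun s => fst (g s))) by auto.
        rewrite (RInt_scal (fun s => snd (g s))) by auto. rewrite HA, HB. reflexivity.
      - apply (ex_RInt_scal (fun s => fst (g s))); auto.
      - apply (ex_RInt_scal (fun s => snd (g s))); auto. }
    rewrite E.
    assert (EC : RInt (fun _ => Cmod (A, B) * M) a b = Cmod (A, B) * ((b - a) * M)).
    { rewrite RInt_const. unfold scal; simpl. unfold mult; simpl. ring. }
    rewrite <- EC.
    apply RInt_le; auto.
    - apply (ex_RInt_plus (fun s => A * fst (g s)) (fun s => B * snd (g s))).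
      apply (ex_RInt_scal (fun s => fst (g s))); auto.
      apply (ex_RInt_scal (fun s => snd (g s))); auto.
    - apply ex_RInt_const.
    - intros s Hs. eapply Rle_trans. apply CS_ineq.
      apply Rmult_le_compat_l; auto. replace (fst (g s), snd (g s)) with (g s) by (destruct (g s); auto).
      apply HM; lra. }
  destruct C0 as [C0|C0].
  - apply Rmult_le_reg_l with (Cmod (A, B)); auto.
  - assert (0 <= (b-a)*M) by (apply Rmult_le_pos; lra). lra.
Qed.

Lemma Gamma_ge0 s : 0 <= Gamma s.
Proof.
  unfold Gamma. set (f := fun t => Rpower t (s - 1) * exp (- t)).
  destruct (classic (exists l, is_RInt_gen f (at_right 0) (Rbar_locally p_infty) l)) as [[l Hl]|Hn].
  - rewrite (is_RInt_gen_unique f l Hl).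
    assert (Hp : filter_prod (at_right 0) (Rbar_locally p_infty) (fun ab : R * R => fst ab <= snd ab)).
    { apply Filter_prod with (fun a => a < 1) (fun b => 1 < b).
      - exists (mkposreal 1 Rlt_0_1). intros y Hy _. unfold ball in Hy; simpl in Hy.
        unfold AbsRing_ball, abs, minus, plus, opp in Hy; simpl in Hy. apply Rabs_def2 in Hy. lra.
      - exists 1. auto.
      - intros a b Ha Hb; simpl; lra. }
    pose proof (@RInt_gen_norm R_CompleteNormedModule (at_right 0) (Rbar_locally p_infty) (at_right_proper_filter 0) (Rbar_locally_filter p_infty)) as H.
    specialize (H (fun y => minus (f y) (f y)) f (minus l l) l Hp).

    enough (0 <= l) by auto. eapply Rle_trans; [|apply H]. apply norm_ge_0.
    + apply (filter_imp (fun _ => True)). 2: apply filter_true.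
      intros ab _ x _. unfold norm, minus, plus, opp; simpl. unfold abs; simpl.
      replace (f x + - f x) with 0 by ring. rewrite Rabs_R0.
      unfold f, Rpower.
      apply Rmult_le_pos; left; apply exp_pos.
    + apply (@is_RInt_gen_minus R_NormedModule); auto.
      apply at_right_proper_filter. apply Rbar_locally_filter.
    + auto.
  - unfold RInt_gen, iota, lim.
    change (0 <= R_complete_lim (fun A : R -> Prop => forall x : R, is_RInt_gen f (at_right 0) (Rbar_locally p_infty) x -> A x)).
    unfold R_complete_lim.
    rewrite (Lub_Rbar_eqset _ (fun _ => True)).
    + replace (Lub_Rbar (fun _ => True)) with p_infty. simpl; lra.
      symmetry. apply is_lub_Rbar_unique. split.
      * intros x _. simpl; auto.
      * intros b Hb. destruct b as [b| |]; simpl; auto.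
        specialize (Hb (b + 1) I). simpl in Hb. lra.
        specialize (Hb 0 I). simpl in Hb. auto.
    + intros x; split; auto. intros _ y Hy. exfalso. apply Hn. eauto.
Qed.

Lemma Cmod_pow_n z k : Cmod (pow_n z k) = Cmod z ^ k.
Proof.
  induction k; simpl.
  - change (@one C_Ring) with (RtoC 1). apply Cmod_1.
  - change (@mult C_Ring) with Cmult. rewrite Cmod_mult, IHk. auto.
Qed.

Lemma Cmod_Cexp u : Cmod (Cexp u) = exp (fst u).
Proof.
  unfold Cmod, Cexp, Re, Im; simpl.
  replace ((exp (fst u) * cos (snd u)) * ((exp (fst u) * cos (snd u)) * 1) +
           (exp (fst u) * sin (snd u)) * ((exp (fst u) * sin (snd u)) * 1))
    with (exp (fst u) * exp (fst u) * (sin (snd u) ^ 2 + cos (snd u) ^ 2)) by ring.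
  rewrite <- !Rsqr_pow2, sin2_cos2, Rmult_1_r. apply sqrt_square. left; apply exp_pos.
Qed.

Lemma Cmod_unit t : Cmod (cos t, sin t) = 1.
Proof.
  unfold Cmod; simpl. replace (cos t * (cos t * 1) + sin t * (sin t * 1)) with (sin t ^2 + cos t ^2) by ring.
  rewrite <- !Rsqr_pow2, sin2_cos2. apply sqrt_1.
Qed.

Lemma Cmod_Cpow_unit t b : Cmod (Cpow_princ (cos t, sin t) (RtoC b)) = 1.
Proof.
  unfold Cpow_princ. rewrite Cmod_Cexp. unfold Clog; simpl. rewrite Cmod_unit, ln_1.
  replace (b * 0 - 0 * Carg (cos t, sin t)) with 0 by ring. apply exp_0.
Qed.

Lemma slit_of z : 0 < fst z \/ 0 < snd z -> slit z.
Proof.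
  intros H. unfold slit. pose proof (Cmod_ge_0 z) as H0. pose proof (Cmod_sq z) as H1.
  destruct H as [H|H]. lra.
  assert (Hy : 0 < snd z * snd z) by (apply Rmult_lt_0_compat; auto).
  assert (Hx : fst z * fst z < Cmod z * Cmod z) by lra.
  assert (Habs : Rabs (fst z) < Cmod z).
  { destruct (Rlt_dec (Rabs (fst z)) (Cmod z)); auto. exfalso.
    assert (Rabs (fst z) * Rabs (fst z) >= Cmod z * Cmod z) by nra.
    rewrite <- Rabs_mult, Rabs_right in H2 by (apply Rle_ge; nra). lra. }
  pose proof (Rle_abs (- fst z)). rewrite Rabs_Ropp in H2. lra.
Qed.

Lemma sq_eq_pos a b : 0 <= a -> 0 <= b -> a * a = b * b -> a = b.
Proof. intros. nra. Qed.

Lemma arc_bound phi th : 0 < phi < PI -> 0 <= th <= phi ->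
  Cmod (Cminus (RtoC 1) (cos th, sin th)) * Cmod (Cminus (cos th, sin th) (cos phi, sin phi))
  <= Cmod (Cminus (RtoC 1) (cos (phi / 2), sin (phi / 2))) ^ 2.
Proof.
  intros Hp Ht. pose proof PI_RGT_0.
  set (al := th / 2). set (be := (phi - th) / 2). set (ga := phi / 4).
  assert (Sa : 0 <= sin al) by (apply sin_ge_0; unfold al; lra).
  assert (Sb : 0 <= sin be) by (apply sin_ge_0; unfold be; lra).
  assert (Sg : 0 <= sin ga) by (apply sin_ge_0; unfold ga; lra).
  assert (E1 : Cmod (Cminus (RtoC 1) (cos th, sin th)) = 2 * sin al).
  { apply sq_eq_pos. apply Cmod_ge_0. lra. rewrite Cmod_sq. simpl.
    replace th with (2 * al) by (unfold al; lra). rewrite cos_2a_sin, sin_2a.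
    pose proof (sin2_cos2 al). unfold Rsqr in *. nra. }
  assert (E2 : Cmod (Cminus (cos th, sin th) (cos phi, sin phi)) = 2 * sin be).
  { apply sq_eq_pos. apply Cmod_ge_0. lra. rewrite Cmod_sq. simpl.
    assert (C : cos (phi - th) = 1 - 2 * sin be * sin be).
    { replace (phi - th) with (2 * be) by (unfold be; lra). apply cos_2a_sin. }
    rewrite cos_minus in C.
    pose proof (sin2_cos2 th). pose proof (sin2_cos2 phi). unfold Rsqr in *. nra. }
  assert (E3 : Cmod (Cminus (RtoC 1) (cos (phi / 2), sin (phi / 2))) = 2 * sin ga).
  { apply sq_eq_pos. apply Cmod_ge_0. lra. rewrite Cmod_sq. simpl.
    replace (phi / 2) with (2 * ga) by (unfold ga; lra). rewrite cos_2a_sin, sin_2a.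
    pose proof (sin2_cos2 ga). unfold Rsqr in *. nra. }
  rewrite E1, E2, E3.
  assert (K : sin al * sin be <= sin ga * sin ga).
  { assert (Cm : cos (al - be) = cos al * cos be + sin al * sin be) by apply cos_minus.
    assert (Cp : cos (al + be) = cos al * cos be - sin al * sin be) by apply cos_plus.
    assert (G : cos (al + be) = 1 - 2 * sin ga * sin ga).
    { replace (al + be) with (2 * ga) by (unfold al, be, ga; lra). apply cos_2a_sin. }
    pose proof (COS_bound (al - be)). lra. }
  nra.
Qed.

Lemma cst_ge0 n r : 0 <= cst_nr n r.
Proof.
  unfold cst_nr, Rdiv. pose proof (Gamma_ge0 (INR r + 1 + / INR n)).
  assert (D : 0 <= INR (fact r) * Gamma (/ INR n)) by (apply Rmult_le_pos; [apply pos_INR|apply Gamma_ge0]).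
  destruct D as [D|D].
  - apply Rmult_le_pos; auto. left; apply Rinv_0_lt_compat; auto.
  - rewrite <- D, Rinv_0. lra.
Qed.

Lemma CD_minus f g x a b : CD f x a -> CD g x b -> CD (fun t => Cminus (f t) (g t)) x (Cminus a b).
Proof.
  intros [H1 H2] [H3 H4]; split; simpl.
  - eapply deq. apply dminus; eassumption. simpl. ring.
  - eapply deq. apply dminus; eassumption. simpl. ring.
Qed.

Lemma CD_RtoC x : CD (fun s => RtoC s) x (RtoC 1).
Proof. split; simpl. apply did. apply dconst. Qed.

Theorem lemma2p5 (phi : R) (n r : nat) :
  0 < phi < PI -> (0 < n)%nat -> (0 < r)%nat ->
  let w : C := (cos phi, sin phi) in
  let sqrtw : C := (cos (phi / 2), sin (phi / 2)) in
  Cmod (R_nr n r w) <= cst_nr n r * phi * (Cmod (Cminus (RtoC 1) sqrtw)) ^ (2 * r).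
Proof.
  intros Hphi Hn Hr w sqrtw. pose proof PI_RGT_0.
  set (b := - (INR r + 1 - / INR n)).
  set (h := fun t : C => Cmult (Cmult (pow_n (Cminus (RtoC 1) t) r) (pow_n (Cminus t w) r))
                               (Cpow_princ t (RtoC b))).
  destruct (PC_pows w r r b) as [G HG].
  assert (Hh : forall g x d, CD g x d -> slit (g x) -> CDex (fun t => h (g t)) x).
  { intros g x d Hd Hs. unfold h. apply CDex_mult. apply CDex_mult; apply CDex_pow.
    - eexists. apply CD_minus. apply CD_const. exact Hd.
    - eexists. apply CD_minus. exact Hd. apply CD_const.
    - eexists. apply CD_Cpow; eauto. }
  set (gs := fun s : R => Cplus (RtoC 1) (Cmult (RtoC s) (Cminus w (RtoC 1)))).
  assert (CDs : forall s, CD gs s (Cminus w (RtoC 1))).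
  { intros s. eapply CD_eq. apply CD_plus. apply CD_const. apply CD_mult. apply CD_RtoC. apply CD_const.
    cbv beta. ring. }
  assert (Ss : forall s, 0 <= s <= 1 -> slit (gs s)).
  { intros s Hs. apply slit_of. unfold gs, w; simpl.
    destruct (Req_dec s 0) as [E|E].
    - left. subst. lra.
    - right. assert (0 < sin phi) by (apply sin_gt_0; lra). nra. }
  assert (Eseg : seg_int h (RtoC 1) w = Cminus (G w) (G (RtoC 1))).
  { unfold seg_int. rewrite (CRInt_eq (fun s => G (gs s))).
    - replace (gs 1) with w by (unfold gs; ring). replace (gs 0) with (RtoC 1) by (unfold gs; ring).
      reflexivity.
    - lra.
    - intros s Hs. exact (HG gs s _ (CDs s) (Ss s Hs)).
    - intros s Hs. apply CDex_mult. apply (Hh gs s _ (CDs s) (Ss s Hs)). eexists; apply CD_const. }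
  set (ga := fun t : R => (cos t, sin t) : C).
  set (da := fun t : R => (- sin t, cos t) : C).
  assert (CDa : forall t, CD ga t (da t)).
  { intros t; unfold ga, da; split; simpl.
    - eapply deq. apply dcos. apply did. cbv beta; ring.
    - eapply deq. apply dsin. apply did. cbv beta; ring. }
  assert (CDda : forall t, CDex da t).
  { intros t. exists (- cos t, - sin t). unfold da; split; simpl.
    - eapply deq. apply (is_derive_opp (fun t => sin t)). apply dsin, did. simpl. unfold opp; simpl. ring.
    - eapply deq. apply dcos. apply did. cbv beta; ring. }
  assert (Sa : forall t, 0 <= t <= phi -> slit (ga t)).
  { intros t Ht. apply slit_of. unfold ga; simpl.
    destruct (Req_dec t 0) as [E|E].
    - left. subst. rewrite cos_0. lra.
    - right. apply sin_gt_0; lra. }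
  assert (HDa : forall t, 0 <= t <= phi -> CD (fun s => G (ga s)) t (Cmult (h (ga t)) (da t))).
  { intros t Ht. exact (HG ga t _ (CDa t) (Sa t Ht)). }
  assert (HCa : forall t, 0 <= t <= phi -> CDex (fun s => Cmult (h (ga s)) (da s)) t).
  { intros t Ht. apply CDex_mult. apply (Hh ga t _ (CDa t) (Sa t Ht)). apply CDda. }
  destruct (CRInt_FTC _ _ 0 phi ltac:(lra) HDa HCa) as [I1 I2].
  assert (Earc : CRInt (fun s => Cmult (h (ga s)) (da s)) 0 phi = Cminus (G w) (G (RtoC 1))).
  { rewrite (CRInt_eq _ _ 0 phi ltac:(lra) HDa HCa).
    replace (ga 0) with (RtoC 1) by (unfold ga; rewrite cos_0, sin_0; reflexivity). reflexivity. }
  assert (ER : R_nr n r w = Cmult (RtoC (cst_nr n r)) (seg_int h (RtoC 1) w)) by reflexivity.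
  rewrite ER, Cmod_mult, Cmod_R, Rabs_right by (apply Rle_ge, cst_ge0).
  rewrite Eseg, <- Earc, Rmult_assoc.
  apply Rmult_le_compat_l. apply cst_ge0.
  replace (phi * Cmod (Cminus (RtoC 1) sqrtw) ^ (2 * r)) with ((phi - 0) * Cmod (Cminus (RtoC 1) sqrtw) ^ (2 * r)) by ring.
  apply CRInt_bound. lra.
  - eexists; exact I1.
  - eexists; exact I2.
  - intros t Ht. rewrite Cmod_mult.
    assert (Cda : Cmod (da t) = 1).
    { unfold da. rewrite <- (Cmod_unit t). unfold Cmod; simpl. f_equal. ring. }
    rewrite Cda, Rmult_1_r. unfold h. rewrite !Cmod_mult, !Cmod_pow_n.
    unfold ga. rewrite Cmod_Cpow_unit, Rmult_1_r, <- Rpow_mult_distr, pow_mult.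
    apply pow_incr. split.
    + apply Rmult_le_pos; apply Cmod_ge_0.
    + apply arc_bound; lra.
Qed.
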